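(* Let $(F,\mathrm{Frob})=\prod_{p\in\mathbb{P}}(\mathbb{F}_{p^{k_p}},\mathrm{Frob}_p)/\mathcal{U}$ be a member of the class $\mathcal{S}$. Then the coarse pseudofinite dimension $\pmb{\delta}_F$ with respect to $F$ takes integer values on all $\mathcal{L}_\sigma$-definable sets (with parameters) of $(F,\mathrm{Frob})$.
   Context: $\mathbb{P}$ is the set of primes; $\mathrm{Frob}_p$ is the map $x\mapsto x^p$. $\mathcal{L}_\sigma$ is the language of rings expanded by a unary function symbol $\sigma$ (interpreted by $\mathrm{Frob}_p$, resp. $\mathrm{Frob}$). For an $\mathcal{L}_\sigma$-formula $\varphi(x,y)$ without parameters and a prime $p$, $\varphi_p(x,y)$ is the ring formula obtained by replacing each occurrence of $\sigma(t)$ by $t^p$. By the theorem of Chatzidakis–van den Dries–Macintyre, for every ring formula $\psi(x,y)$ with $|x|=n$ there are a constant $C_\psi>0$ and a finite set $D_\psi\subseteq\{0,\dots,n\}\times\mathbb{R}^{>0}$ such that for every finite field $\mathbb{F}_q$ and $a\in\mathbb{F}_q^{|y|}$ with $\psi(\mathbb{F}_q^n,a)\neq\emptyset$ there is $(d,\mu)\in D_\psi$ with $\big||\psi(\mathbb{F}_q^n,a)|-\mu q^d\big|\le C_\psi q^{d-1/2}$; fix such $C_\psi,D_\psi$ for each $\psi$, and let $E_\psi=\{\mu:(d,\mu)\in D_\psi\}$. Put $N^p_{\varphi}=\max\{\mu,1/\mu,2\log_p(2C_{\varphi_p}/\mu):\mu\in E_{\varphi_p}\}$ and $f(\ell,p)=\max\{N^p_\varphi:\varphi(x,y)\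 \mathcal{L}_\sigma\text{-formula without parameters},\ |\varphi|\le\ell\}$, where $|\varphi|$ is the length of $\varphi$. The class $\mathcal{S}$ consists of all ultraproducts $\prod_{p\in\mathbb{P}}(\mathbb{F}_{p^{k_p}},\mathrm{Frob}_p)/\mathcal{U}$ with $\mathcal{U}$ a non-principal ultrafilter on $\mathbb{P}$ and $k_p\ge f(p,p)$ for all $p$. For an ultraproduct $M$ of finite structures, an internal set $D=\prod D_i/\mathcal{U}$ has nonstandard cardinality $|D|=(|D_i|)/\mathcal{U}\in\mathbb{R}^*$; for an internal set $X$ and a definable set $A$, $\pmb{\delta}_X(A)=\mathrm{st}(\log|A|/\log|X|)$ (standard part); $\pmb{\delta}_F$ is $\pmb{\delta}_X$ with $X=F$. *)

(* Defs.v *)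
From Stdlib Require Import Reals ClassicalEpsilon.
From mathcomp Require Import all_boot all_algebra.
Set Implicit Arguments. Unset Strict Implicit. Unset Printing Implicit Defensive.

Inductive Lterm : Type :=
| TVar of nat | TZero | TOne
| TAdd of Lterm & Lterm | TNeg of Lterm | TMul of Lterm & Lterm
| TSig of Lterm.

Inductive Lform : Type :=
| FEq of Lterm & Lterm | FNot of Lform | FAnd of Lform & Lform
| FEx of nat & Lform.

Fixpoint tsize (t : Lterm) : nat :=
  match t with
  | TVar _ | TZero | TOne => 1
  | TAdd s u | TMul s u => (tsize s + tsize u).+1
  | TNeg s | TSig s => (tsize s).+1
  end.
Fixpoint fsize (f : Lform) : nat :=
  match f with
  | FEq s t => (tsize s + tsize t).+1
  | FNot g => (fsize g).+1
  | FAnd g h => (fsize g + fsize h).+1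
  | FEx _ g => (fsize g).+2
  end.

Fixpoint tvars (t : Lterm) : seq nat :=
  match t with
  | TVar i => [:: i]
  | TZero | TOne => [::]
  | TAdd s u | TMul s u => tvars s ++ tvars u
  | TNeg s | TSig s => tvars s
  end.
Fixpoint ffv (f : Lform) : seq nat :=
  match f with
  | FEq s t => tvars s ++ tvars t
  | FNot g => ffv g
  | FAnd g h => ffv g ++ ffv h
  | FEx i g => [seq j <- ffv g | j != i]
  end.
(* phi(x,y) with |x| = n, |y| = m : free variables among x_0..x_{n-1} = var 0..n-1,
   y_0..y_{m-1} = var n..n+m-1 *)
Definition fv_below (N : nat) (f : Lform) : bool := all (fun i => i < N) (ffv f).

Fixpoint tsigfree (t : Lterm) : bool :=
  match t with
  | TVar _ | TZero | TOne => true
  | TAdd s u | TMul s u => tsigfree s && tsigfree u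
  | TNeg s => tsigfree s
  | TSig _ => false
  end.
Fixpoint fsigfree (f : Lform) : bool :=
  match f with
  | FEq s t => tsigfree s && tsigfree t
  | FNot g => fsigfree g
  | FAnd g h => fsigfree g && fsigfree h
  | FEx _ g => fsigfree g
  end.

Fixpoint tpow (t : Lterm) (n : nat) : Lterm :=
  match n with 0 => TOne | n'.+1 => TMul t (tpow t n') end.
Fixpoint tsubp (p : nat) (t : Lterm) : Lterm :=
  match t with
  | TVar i => TVar i | TZero => TZero | TOne => TOne
  | TAdd s u => TAdd (tsubp p s) (tsubp p u)
  | TMul s u => TMul (tsubp p s) (tsubp p u)
  | TNeg s => TNeg (tsubp p s)
  | TSig s => tpow (tsubp p s) p
  end.
Fixpoint fsubp (p : nat) (f : Lform) : Lform :=
  match f with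
  | FEq s t => FEq (tsubp p s) (tsubp p t)
  | FNot g => FNot (fsubp p g)
  | FAnd g h => FAnd (fsubp p g) (fsubp p h)
  | FEx i g => FEx i (fsubp p g)
  end.

(* ---------- Semantics in an L_sigma-structure (carrier with a congruence) ---------- *)
Record sigstr := SigStr {
  s_car :> Type;
  s_eq : s_car -> s_car -> Prop;
  s_zero : s_car; s_one : s_car;
  s_add : s_car -> s_car -> s_car; s_mul : s_car -> s_car -> s_car;
  s_opp : s_car -> s_car; s_sig : s_car -> s_car }.

Fixpoint teval (S : sigstr) (e : nat -> S) (t : Lterm) : S :=
  match t with
  | TVar i => e i
  | TZero => s_zero S | TOne => s_one S
  | TAdd s u => s_add (teval e s) (teval e u)
  | TMul s u => s_mul (teval e s) (teval e u)
  | TNeg s => s_opp (teval e s)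
  | TSig s => s_sig (teval e s)
  end.
Fixpoint holds (S : sigstr) (e : nat -> S) (f : Lform) : Prop :=
  match f with
  | FEq s t => @s_eq S (teval e s) (teval e t)
  | FNot g => ~ holds e g
  | FAnd g h => holds e g /\ holds e h
  | FEx i g => exists v : S, holds (fun j => if j == i then v else e j) g
  end.

Definition env_xy (T : Type) (d : T) (n m : nat) (x : 'I_n -> T) (y : 'I_m -> T)
  : nat -> T := fun i =>
  if (insub i : option 'I_n) is Some j then x j
  else if (insub (i - n) : option 'I_m) is Some j then y j else d.

Definition pb (P : Prop) : bool := if excluded_middle_informative P then true else false.

Definition ffstr (K : finFieldType) (p : nat) : sigstr :=
  @SigStr K (@eq K) 0%R 1%R (@GRing.add K) (@GRing.mul K) (@GRing.opp K)
    (fun x => (x ^+ p)%R).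

Definition nsols (K : finFieldType) (p : nat) (psi : Lform) (n m : nat) (a : 'I_m -> K) : nat :=
  #|[set x : {ffun 'I_n -> K} | pb (holds (S := ffstr K p) (env_xy 0%R x a) psi)]|.

Section RealDefs.
Local Open Scope R_scope.
Definition CDM_constants (C : Lform -> nat -> nat -> R) (D : Lform -> nat -> nat -> seq (nat * R)%type) : Prop :=
  forall psi n m, fsigfree psi -> fv_below (n + m) psi ->
    (0 < C psi n m) /\
    (forall d mu, List.In (d, mu) (D psi n m) -> (d <= n)%N /\ (0 < mu)) /\
    (forall (K : finFieldType) (a : 'I_m -> K),
        (0 < nsols 1%N psi n a)%N ->
        exists d mu, List.In (d, mu) (D psi n m) /\
          (Rabs (INR (nsols 1%N psi n a) - mu * INR #|K| ^ d)
             <= C psi n m * Rpower (INR #|K|) (INR d - 1 / 2))).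

(* k >= f(p,p) = max { N^p_phi : |phi| <= p }, written as: k >= N^p_phi for all such phi,
   where N^p_phi = max { mu, 1/mu, 2 log_p (2 C_{phi_p} / mu) : mu in E_{phi_p} } *)
Definition k_large (C : Lform -> nat -> nat -> R) (D : Lform -> nat -> nat -> seq (nat * R)%type)
  (k p : nat) : Prop :=
  forall phi n m, fv_below (n + m) phi -> (fsize phi <= p)%N ->
    forall mu, (exists d, List.In (d, mu) (D (fsubp p phi) n m)) ->
      (mu <= INR k) /\ (1 / mu <= INR k) /\
      (2 * (ln (2 * C (fsubp p phi) n m / mu) / ln (INR p)) <= INR k).

End RealDefs.

Definition ultrafilter (U : (nat -> Prop) -> Prop) : Prop :=
  U (fun _ => True) /\ ~ U (fun _ => False) /\
  (forall A B : nat -> Prop, U A -> (forall i, A i -> B i) -> U B) /\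
  (forall A B : nat -> Prop, U A -> U B -> U (fun i => A i /\ B i)) /\
  (forall A : nat -> Prop, U A \/ U (fun i => ~ A i)).
Definition nonprincipal (U : (nat -> Prop) -> Prop) : Prop :=
  forall n : nat, ~ U (fun i => i = n).

Definition ultraprod (U : (nat -> Prop) -> Prop) (K : nat -> finFieldType) : sigstr :=
  @SigStr (forall p, K p) (fun x y => U (fun p => x p = y p))
    (fun p => 0%R) (fun p => 1%R)
    (fun x y p => (x p + y p)%R) (fun x y p => (x p * y p)%R)
    (fun x p => (- x p)%R) (fun x p => (x p ^+ p)%R).

Definition definable (S : sigstr) (n : nat) (A : ('I_n -> S) -> Prop) : Prop :=
  exists (phi : Lform) (m : nat) (a : 'I_m -> S),
    fv_below (n + m) phi /\
    forall x : 'I_n -> S, A x <-> holds (env_xy (@s_zero S) x a) phi.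

Definition internal_rep (U : (nat -> Prop) -> Prop) (K : nat -> finFieldType) (n : nat)
  (A : ('I_n -> ultraprod U K) -> Prop) (Dset : forall p, {set {ffun 'I_n -> K p}}) : Prop :=
  forall x : 'I_n -> ultraprod U K, A x <-> U (fun p => [ffun i => x i p] \in Dset p).

Section RealDefs2.
Local Open Scope R_scope.
(* st(x) = r for x = (x_p)/U in R^* *)
Definition st_eq (U : (nat -> Prop) -> Prop) (x : nat -> R) (r : R) : Prop :=
  forall eps, (0 < eps) -> U (fun p => (Rabs (x p - r) < eps)).

(* delta_F(A) = st(log|A| / log|F|) = r, with |A| = (|Dset_p|)/U, |F| = (|K p|)/U *)
Definition delta_F_eq (U : (nat -> Prop) -> Prop) (K : nat -> finFieldType) (n : nat)
  (Dset : forall p, {set {ffun 'I_n -> K p}}) (r : R) : Prop :=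
  st_eq U (fun p => ln (INR #|Dset p|) / ln (INR #|K p|)) r.
End RealDefs2.

(* Main.v *)
Require Import Defs.
From Stdlib Require Import Reals ZArith Lra FunctionalExtensionality ClassicalEpsilon.
Section RealPart.
Local Open Scope R_scope.

Lemma ln_le' x y : 0 < x -> x <= y -> ln x <= ln y.
Proof. intros Hx [H|H]. left; apply ln_increasing; auto. subst; lra. Qed.
Lemma exp_le' x y : x <= y -> exp x <= exp y.
Proof. intros [H|H]. left; apply exp_increasing; auto. subst; lra. Qed.
Lemma ln_lt_self x : 0 < x -> ln x < x.
Proof.
  intros Hx. rewrite <- (exp_ln x) at 2 by auto.
  destruct (Req_dec (ln x) 0) as [E|E].
  - rewrite E, exp_0; lra.
  - pose proof (exp_ineq1 _ E); lra.
Qed.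

Lemma real_core (P : R) (kn d : nat) (mu Cc N : R) :
 1 < P -> 0 < mu -> 0 < Cc -> mu <= INR kn -> 1/mu <= INR kn ->
 2 * (ln (2*Cc/mu) / ln P) <= INR kn -> 0 < N ->
 Rabs (N - mu * (P^kn) ^ d) <= Cc * Rpower (P^kn) (INR d - 1/2) ->
 Rabs (ln N / ln (P^kn) - INR d) < 2 / ln P.
Proof.
  intros HP Hmu HC Hk1 Hk2 Hk3 HN Hb.
  set (k := INR kn) in *.
  assert (Hk : 1 <= k).
  { assert (0 <= k) by (apply pos_INR).
    assert (mu * (1/mu) = 1) by (field; lra).
    assert (0 < 1/mu) by (apply Rdiv_lt_0_compat; lra).
    destruct (Rle_or_lt 1 k) as [h|h]; auto. nra. }
  set (L := ln P) in *.
  assert (HL : 0 < L) by (unfold L; rewrite <- ln_1; apply ln_increasing; lra).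
  assert (HP0 : 0 < P) by lra.
  set (Q := P ^ kn) in *.
  assert (HQ : 0 < Q) by (apply pow_lt; lra).
  assert (HlnQ : ln Q = k * L) by (unfold Q, k, L; apply ln_pow; lra).
  set (Qd := Q ^ d) in *.
  assert (HQd : 0 < Qd) by (apply pow_lt; lra).
  assert (HlnQd : ln Qd = INR d * (k * L)) by (unfold Qd; rewrite ln_pow; auto; rewrite HlnQ; auto).
  set (s := exp (k * L / 2)).
  assert (Hs : 0 < s) by apply exp_pos.
  assert (HR : Rpower Q (INR d - 1/2) = Qd / s).
  { unfold Rpower, s. rewrite HlnQ.
    replace ((INR d - 1/2) * (k*L)) with (ln Qd + - (k*L/2)) by (rewrite HlnQd; field).
    rewrite exp_plus, exp_ln by auto. rewrite exp_Ropp. unfold Rdiv. ring. }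
  assert (H2C : 2 * Cc / mu <= s).
  { assert (ln (2*Cc/mu) <= k * L / 2).
    { unfold Rdiv in Hk3 |- *. 
      set (z := ln (2 * Cc * / mu)) in *.
      replace z with ((2 * (z * / L)) * L * / 2) by (field; lra).
      apply Rmult_le_compat_r; [apply Rlt_le, Rinv_0_lt_compat; lra|]. apply Rmult_le_compat_r; lra. }
    unfold s. rewrite <- (exp_ln (2*Cc/mu)). apply exp_le'. exact H.
    apply Rdiv_lt_0_compat; lra. }
  fold Q Qd in Hb. rewrite HR in Hb.
  assert (HCs : Cc * (Qd / s) <= mu * Qd / 2).
  { assert (Cc / s <= mu / 2).
    { apply (Rmult_le_reg_r s); [lra|]. replace (Cc / s * s) with Cc by (field; lra).
      apply (Rmult_le_compat_r (mu/2)) in H2C; [|lra].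
      replace (2 * Cc / mu * (mu / 2)) with Cc in H2C by (field; lra). lra. }
    replace (Cc * (Qd / s)) with (Cc / s * Qd) by (field; lra).
    replace (mu * Qd / 2) with (mu / 2 * Qd) by field.
    apply Rmult_le_compat_r; lra. }
  pose proof (Rle_abs (N - mu*Qd)) as Hb1; pose proof (Rle_abs (-(N - mu*Qd))) as Hb2; rewrite Rabs_Ropp in Hb2.
  set (X := N / Qd).
  assert (HX1 : mu / 2 <= X).
  { unfold X. apply (Rmult_le_reg_r Qd); auto. replace (N / Qd * Qd) with N by (field; lra). lra. }
  assert (HX2 : X <= 3 * mu / 2).
  { unfold X. apply (Rmult_le_reg_r Qd); auto. replace (N / Qd * Qd) with N by (field; lra). lra. }
  assert (HX0 : 0 < X) by lra.
  assert (HlnN : ln N = ln X + INR d * (k * L)).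
  { rewrite <- HlnQd, <- ln_mult by auto. unfold X. f_equal. field. lra. }
  assert (Hmu2 : 1 / (2 * k) <= mu / 2).
  { apply (Rmult_le_compat_r (mu / (2*k))) in Hk2; [| apply Rlt_le, Rdiv_lt_0_compat; lra].
    replace (1 / mu * (mu / (2 * k))) with (1/(2*k)) in Hk2 by (field; lra).
    replace (k * (mu / (2*k))) with (mu/2) in Hk2 by (field; lra). exact Hk2. }
  assert (HlX1 : ln X <= ln (2 * k)) by (apply ln_le'; lra).
  assert (HlX2 : - ln (2 * k) <= ln X).
  { rewrite <- ln_Rinv by lra. apply ln_le'. apply Rinv_0_lt_compat; lra.
    replace (/ (2*k)) with (1 / (2*k)) by (field; lra). lra. }
  assert (Hl2k : ln (2 * k) < 2 * k) by (apply ln_lt_self; lra).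
  rewrite HlnQ, HlnN.
  replace ((ln X + INR d * (k * L)) / (k * L) - INR d) with (ln X / (k * L)) by (field; lra).
  unfold Rdiv. rewrite Rabs_mult, Rabs_inv, (Rabs_right (k*L)) by nra.
  apply (Rmult_lt_reg_r (k * L)); [nra|].
  replace (Rabs (ln X) * / (k * L) * (k * L)) with (Rabs (ln X)) by (field; nra).
  replace (2 * / L * (k * L)) with (2 * k) by (field; lra).
  apply Rabs_def1; lra.
Qed.
Lemma final_bd P eps x : 0 < eps -> exp (2/eps) < P -> x < 2 / ln P -> x < eps.
Proof.
  intros He HP Hx.
  assert (HP0 : 0 < P) by (pose proof (exp_pos (2/eps)); lra).
  assert (HL : 2 / eps < ln P).
  { rewrite <- (ln_exp (2/eps)). apply ln_increasing; auto. apply exp_pos. }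
  assert (H2 : 0 < 2 / eps) by (apply Rdiv_lt_0_compat; lra).
  assert (2 / ln P < eps).
  { apply (Rmult_lt_reg_r (ln P)); [lra|].
    replace (2 / ln P * ln P) with 2 by (field; lra).
    apply (Rmult_lt_compat_l eps) in HL; auto.
    replace (eps * (2/eps)) with 2 in HL by (field; lra). lra. }
  lra.
Qed.
End RealPart.
From mathcomp Require Import all_boot all_algebra.
Set Implicit Arguments. Unset Strict Implicit. Unset Printing Implicit Defensive.
Import GRing.Theory.

Lemma INR_expn p k : INR (p ^ k) = pow (INR p) k.
Proof. elim: k => [|k IH] //=. by rewrite expnS -multE mult_INR IH. Qed.

Section Ultra.
Variable U : (nat -> Prop) -> Prop.
Hypothesis HU : ultrafilter U.

Lemma U_mono (A B : nat -> Prop) : U A -> (forall i, A i -> B i) -> U B.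
Proof. case: HU => _ [_ [H _]]; exact: H. Qed.
Lemma U_and (A B : nat -> Prop) : U A -> U B -> U (fun i => A i /\ B i).
Proof. case: HU => _ [_ [_ [H _]]]; exact: H. Qed.
Lemma U_False (A : nat -> Prop) : U A -> (forall i, ~ A i) -> False.
Proof. move=> UA HA; case: HU => _ [H _]; apply: H; exact: U_mono UA HA. Qed.
Lemma U_not (A : nat -> Prop) : U (fun i => ~ A i) <-> ~ U A.
Proof.
split=> [UnA UA|nUA].
- apply: (U_False (U_and UnA UA)) => i [] //.
- by case: HU => _ [_ [_ [_ H]]]; case: (H A).
Qed.
Lemma U_ge N : nonprincipal U -> U (fun p => N <= p)%N.
Proof.
move=> Hnp; elim: N => [|N IH].
  by case: HU => HT _; apply: U_mono HT _.
have H1 : U (fun i => ~ i = N) by apply/U_not; apply: Hnp.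
apply: U_mono (U_and IH H1) _ => i [h1 h2]; rewrite ltn_neqAle h1 andbT; apply/eqP; auto.
Qed.
Lemma U_fin_ex (P : nat -> nat -> Prop) N :
  U (fun p => exists d, (d <= N)%N /\ P d p) -> exists d, (d <= N)%N /\ U (P d).
Proof.
elim: N => [|N IH] H.
  exists 0%N; split => //; apply: U_mono H _ => p [d [hd hp]].
  by move: hd; rewrite leqn0 => /eqP <-.
case: HU => _ [_ [_ [_ Hc]]].
case: (Hc (P N.+1)) => [h|h]; first by exists N.+1.
have [d [hd hU]] : exists d, (d <= N)%N /\ U (P d).
  apply: IH; apply: U_mono (U_and H h) _ => p [[d [hd hp]] hn].
  exists d; split => //; rewrite leq_eqVlt in hd; case/orP: hd => [/eqP E|//].
  by subst d.
by exists d; split => //; apply: leqW.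
Qed.
End Ultra.

Lemma pbE (P : Prop) : pb P <-> P.
Proof. rewrite /pb; case: excluded_middle_informative => h; split => //. Qed.
Lemma pb_iff (P Q : Prop) : (P <-> Q) -> pb P = pb Q.
Proof.
move=> h; rewrite /pb; case: excluded_middle_informative => a; case: excluded_middle_informative => b //; exfalso; tauto.
Qed.

Section Los.
Variable U : (nat -> Prop) -> Prop.
Hypothesis HU : ultrafilter U.
Variable K : nat -> finFieldType.

Lemma teval_ultra (e : nat -> ultraprod U K) t p :
  teval e t p = teval (S := ffstr (K p) p) (fun i => e i p) t.
Proof. elim: t => //= [s IHs u IHu|s IHs|s IHs u IHu|s IHs]; by rewrite ?IHs ?IHu. Qed.

Lemma los f : forall e : nat -> ultraprod U K,
  holds e f <-> U (fun p => holds (S := ffstr (K p) p) (fun i => e i p) f).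
Proof.
elim: f => [s t|g IH|g IHg h IHh|j g IH] e /=.
- have -> : (fun p => teval e s p = teval e t p) =
            (fun p => teval (S := ffstr (K p) p) (fun i => e i p) s =
                      teval (S := ffstr (K p) p) (fun i => e i p) t).
    by apply: functional_extensionality => p; rewrite !teval_ultra.
  by [].
- rewrite IH; split => h; first by apply/(U_not HU).
  by apply/(U_not HU).
- rewrite IHg IHh; split => [[h1 h2]|hh]; first exact: (U_and HU).
  split; apply: (U_mono HU) hh _ => p [] //.
- have Ee : forall (v : ultraprod U K) p,
    (fun i => (if i == j then v else e i) p) = (fun i => if i == j then v p else e i p).
    by move=> v p; apply: functional_extensionality => i; case: (i == j).
  split.
  + case=> v /IH; rewrite /=; move=> hv; apply: (U_mono HU) hv _ => p.
    by rewrite Ee => hp; exists (v p).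
  + move=> hU.
    pose v : ultraprod U K := fun p =>
      match excluded_middle_informative
        (exists w : K p, holds (S := ffstr (K p) p) (fun i => if i == j then w else e i p) g) with
      | left h => proj1_sig (constructive_indefinite_description _ h)
      | right _ => 0%R end.
    exists v; apply/IH; apply: (U_mono HU) hU _ => p hp; rewrite Ee /v.
    case: excluded_middle_informative => [h|//].
    exact: (proj2_sig (constructive_indefinite_description _ h)).
Qed.
End Los.

Section Subp.
Variable K : finFieldType.

Lemma tpow_eval q (e : nat -> ffstr K q) u n :
  teval e (tpow u n) = ((teval e u) ^+ n)%R.
Proof. elim: n => [|n IH] //=; by rewrite IH exprS. Qed.

Lemma tsubp_eval p (e : nat -> K) t :
  teval (S := ffstr K p) e t = teval (S := ffstr K 1) e (tsubp p t).
Proof.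
elim: t => //= [s IHs u IHu|s IHs|s IHs u IHu|s IHs]; rewrite ?IHs ?IHu //.
by rewrite (tpow_eval (q := 1)).
Qed.

Lemma fsubp_holds p f : forall (e : nat -> K),
  holds (S := ffstr K p) e f <-> holds (S := ffstr K 1) e (fsubp p f).
Proof.
elim: f => [s t|g IH|g IHg h IHh|j g IH] e /=.
- by rewrite !(tsubp_eval p).
- by rewrite IH.
- by rewrite IHg IHh.
- by split=> [[v /IH hv]|[v /IH hv]]; exists v.
Qed.
End Subp.

Lemma tpow_sigfree u n : tsigfree u -> tsigfree (tpow u n).
Proof. by move=> hu; elim: n => //= n ->; rewrite hu. Qed.
Lemma tsubp_sigfree p t : tsigfree (tsubp p t).
Proof. elim: t => //= [s -> u ->|s -> u ->|s hs] //; exact: tpow_sigfree. Qed.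
Lemma fsubp_sigfree p f : fsigfree (fsubp p f).
Proof. elim: f => //= [s t|g -> h ->] //; by rewrite !tsubp_sigfree. Qed.

Lemma tpow_vars u n : {subset tvars (tpow u n) <= tvars u}.
Proof. elim: n => //= n IH i; rewrite mem_cat => /orP [//|/IH //]. Qed.
Lemma tsubp_vars p t : {subset tvars (tsubp p t) <= tvars t}.
Proof.
elim: t => [i|||s IHs u IHu|s IHs|s IHs u IHu|s IHs] x //.
- rewrite [tsubp _ _]/= [tvars (TAdd _ _)]/= [tvars (TAdd s u)]/= !mem_cat.
  by case/orP => [/IHs ->|/IHu ->] //; rewrite orbT.
- exact: IHs.
- rewrite [tsubp _ _]/= [tvars (TMul _ _)]/= [tvars (TMul s u)]/= !mem_cat.
  by case/orP => [/IHs ->|/IHu ->] //; rewrite orbT.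
- by move/tpow_vars/IHs.
Qed.
Lemma fsubp_vars p f : {subset ffv (fsubp p f) <= ffv f}.
Proof.
elim: f => //= [s t i|g IHg h IHh i|j g IH i].
- by rewrite !mem_cat => /orP [/tsubp_vars ->|/tsubp_vars ->] //; rewrite orbT.
- by rewrite !mem_cat => /orP [/IHg ->|/IHh ->] //; rewrite orbT.
- by rewrite !mem_filter => /andP [-> /IH ->].
Qed.
Lemma fsubp_fv N p f : fv_below N f -> fv_below N (fsubp p f).
Proof. move=> /allP h; apply/allP => i /fsubp_vars; exact: h. Qed.

Section GSec.
Local Open Scope R_scope.
Definition Gd (C : Lform -> nat -> nat -> R) (D : Lform -> nat -> nat -> seq (nat * R))
  (K : nat -> finFieldType) (phi : Lform) (n m : nat) (N : nat -> nat) (d p : nat) : Prop :=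
  exists mu, List.In (d, mu) (D (fsubp p phi) n m) /\
    Rabs (INR (N p) - mu * INR #|K p| ^ d) <= C (fsubp p phi) n m * Rpower (INR #|K p|) (INR d - 1/2).
End GSec.

Theorem theorem2p10
  (C : Lform -> nat -> nat -> R) (D : Lform -> nat -> nat -> seq (nat * R))
  (HCD : CDM_constants C D)
  (K : nat -> finFieldType) (k : nat -> nat)
  (Hcard : forall p, prime p -> #|K p| = (p ^ k p)%N)
  (Hk : forall p, prime p -> k_large C D (k p) p)
  (U : (nat -> Prop) -> Prop) (HU : ultrafilter U) (Hnp : nonprincipal U)
  (HP : U (fun p => prime p))
  (n : nat) (A : ('I_n -> ultraprod U K) -> Prop)
  (HA : definable A) (Hne : exists x, A x) :
  (exists Dset, internal_rep A Dset) /\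
  (forall Dset, internal_rep A Dset -> exists z : Z, delta_F_eq U Dset (IZR z)).
Proof.
case: HA => phi [m [a [Hfv HAeq]]].
pose D0 := fun p => [set x : {ffun 'I_n -> K p} |
   pb (holds (S := ffstr (K p) p) (env_xy 0%R x (fun j => a j p)) phi)].
have Henv : forall (x : 'I_n -> ultraprod U K) p,
    (fun i => env_xy (s_zero (ultraprod U K)) x a i p) =
    env_xy 0%R [ffun i => x i p] (fun j => a j p).
  move=> x p; apply: functional_extensionality => i; rewrite /env_xy.
  case: (insub i) => [j|]; first by rewrite ffunE.
  by case: (insub (i - n)).
have Hrep0 : internal_rep A D0.
  move=> x; rewrite HAeq (los HU); split => h; apply: (U_mono HU) h _ => p.
  - by rewrite Henv inE => /pbE.
  - by rewrite Henv inE => /pbE.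
have Huniq : forall D1 D2, internal_rep A D1 -> internal_rep A D2 -> U (fun p => D1 p = D2 p).
  move=> D1 D2 h1 h2; case: (HU) => _ [_ [_ [_ Hc]]].
  case: (Hc (fun p => D1 p = D2 p)) => // hneq; exfalso.
  pose w := fun p => odflt [ffun=> 0%R] [pick x | (x \in D1 p) != (x \in D2 p)].
  pose X : 'I_n -> ultraprod U K := fun i p => w p i.
  have HX : forall p, [ffun i => X i p] = w p by move=> p; apply/ffunP=> i; rewrite ffunE.
  have Hw : forall p, D1 p <> D2 p -> (w p \in D1 p) != (w p \in D2 p).
    move=> p hp; rewrite /w; case: pickP => [x -> //|h]; exfalso; apply: hp.
    by apply/setP => x; move: (h x) => /negbFE/eqP.
  case: (Hc (fun p => w p \in D1 p)) => hc.
  - have : A X by apply/h1; apply: (U_mono HU) hc _ => p; rewrite HX.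
    move/h2 => hc2.
    have hc2' : U (fun p => w p \in D2 p) by apply: (U_mono HU) hc2 _ => p; rewrite HX.
    apply: (U_False HU (U_and HU (U_and HU hc hc2') hneq)) => p [[a1 a2] /Hw].
    by rewrite a1 a2.
  - have nA : ~ A X.
      move/h1 => hA; apply: (U_False HU (U_and HU hc hA)) => p [b1 b2].
      by rewrite HX in b2.
    have hc2 : U (fun p => ~ (w p \in D2 p)).
      apply/(U_not HU) => hc2; apply: nA; apply/h2; apply: (U_mono HU) hc2 _ => p.
      by rewrite HX.
    apply: (U_False HU (U_and HU (U_and HU hc hc2) hneq)) => p [[b1 b2] /Hw].
    by move/negP/negbTE: b1 => ->; move/negP/negbTE: b2 => ->.
split; first by exists D0.
move=> Dset Hrep.
have HE := Huniq _ _ Hrep Hrep0.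
have Hpos : U (fun p => 0 < #|D0 p|)%N.
  case: Hne => x0 /Hrep0 hx0; apply: (U_mono HU) hx0 _ => p hp.
  by apply/card_gt0P; exists [ffun i => x0 i p].
have Hsz := U_ge HU (fsize phi) Hnp.
have Hgood : U (fun p => exists d, (d <= n)%N /\
   (prime p /\ (fsize phi <= p)%N /\ Dset p = D0 p /\ (0 < #|D0 p|)%N /\
    Gd C D K phi n m (fun p => #|D0 p|) d p)).
  apply: (U_mono HU) (U_and HU (U_and HU (U_and HU HP Hsz) HE) Hpos) _.
  move=> p [[[hp hs] he] hpos].
  have [hC0 [hCD hCK]] := HCD (fsubp p phi) n m (fsubp_sigfree _ _) (fsubp_fv p Hfv).
  have Hns : nsols 1 (fsubp p phi) n (fun j => a j p) = #|D0 p|.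
    rewrite /nsols; apply: eq_card => x; rewrite !inE; apply: pb_iff.
    exact: (iff_sym (fsubp_holds p phi _)).
  have := hCK (K p) (fun j => a j p); rewrite Hns => /(_ hpos) [d [mu [hin hb]]].
  exists d; split; first by case: (hCD d mu hin).
  by do 4 (split => //); exists mu; split.
have [d [hd hUd]] := U_fin_ex HU Hgood.
exists (Z.of_nat d) => eps heps.
have [N0 hN0] := INR_unbounded (exp (2/eps)).
apply: (U_mono HU) (U_and HU hUd (U_ge HU N0 Hnp)) _.
move=> p [[hp [hsz [hDE [hpos [mu [hin hb]]]]]] hN].
rewrite hDE -INR_IZR_INZ.
have [k1 [k2 k3]] := Hk p hp phi n m Hfv hsz mu (ex_intro _ d hin).
have [hC0 [hCD _]] := HCD (fsubp p phi) n m (fsubp_sigfree _ _) (fsubp_fv p Hfv).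
have [_ hmu] := hCD d mu hin.
rewrite Hcard // INR_expn in hb *.
have hP := lt_1_INR _ (ltP (prime_gt1 hp)).
have hNpos := lt_0_INR _ (ltP hpos).
have core := real_core _ _ _ _ _ _ hP hmu hC0 k1 k2 k3 hNpos hb.
apply: (final_bd _ _ _ heps _ core).
apply: Rlt_le_trans (Rgt_lt _ _ hN0) _; apply: le_INR; apply/leP.
exact: hN.
Qed.
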